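(* Let $e_1,\dots,e_n$ be an orthonormal basis of $\mathbb{R}^n$ and, for $0<\alpha<1$, let $$T_{\alpha}=\{x\in\mathbb{R}^n: |x\cdot e_1|\leq\alpha\ \text{and}\ |x\cdot e_2|^2+\cdots+|x\cdot e_n|^2\leq1\}.$$ If $j\neq n$, $0<q<n-j$, and $Q\in\mathcal{S}_o^n$ is fixed, then $$\lim_{\alpha\rightarrow0^+}\int_{S^{n-1}}\rho_{T_\alpha}^q(u)\rho_Q^{n-q-j}(u)\,du=0.$$
   Context: $\mathcal{S}_o^n$ denotes the set of compact sets in $\mathbb{R}^n$ star-shaped about the origin whose radial function $\rho_Q(x)=\max\{\lambda\ge0:\lambda x\in Q\}$ is positive and continuous on $\mathbb{R}^n\setminus\{0\}$; $\rho_{T_\alpha}$ is the radial function of $T_\alpha$ defined the same way; $du$ is spherical Lebesgue measure on $S^{n-1}$. *)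

(* Defs.v *)
From HB Require Import structures.
From mathcomp Require Import all_boot all_order all_algebra.
From mathcomp Require Import all_classical all_reals all_analysis.
Set Implicit Arguments. Unset Strict Implicit. Unset Printing Implicit Defensive.
Import Order.TTheory GRing.Theory Num.Theory.
Import numFieldNormedType.Exports.
Local Open Scope classical_set_scope.
Local Open Scope ring_scope.

Section Defs.
Variable R : realType.

Definition dotp (n : nat) (x y : 'rV[R]_n) : R := \sum_(i < n) x 0 i * y 0 i.
Definition enorm (n : nat) (x : 'rV[R]_n) : R := Num.sqrt (dotp x x).

(* e_1,...,e_n (here e 0, ..., e (n-1)) is an orthonormal family of n vectors
   in R^n, i.e. an orthonormal basis *)
Definition orthonormal_basis (n : nat) (e : nat -> 'rV[R]_n) : Prop :=
  forall i j, (i < n)%N -> (j < n)%N -> dotp (e i) (e j) = (i == j)%:R.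

Definition Talpha (n : nat) (e : nat -> 'rV[R]_n) (alpha : R) : set 'rV[R]_n :=
  [set x | `|dotp x (e 0%N)| <= alpha /\
           \sum_(1 <= i < n) (dotp x (e i)) ^+ 2 <= 1].

Definition radial (n : nat) (Q : set 'rV[R]_n) (x : 'rV[R]_n) : R :=
  sup [set l : R | 0 <= l /\ Q (l *: x)].

Definition star_shaped0 (n : nat) (Q : set 'rV[R]_n) : Prop :=
  forall x, Q x -> forall t : R, 0 <= t <= 1 -> Q (t *: x).

Definition in_Son (n : nat) (Q : set 'rV[R]_n) : Prop :=
  [/\ compact Q, star_shaped0 Q,
      (forall x, x != 0 -> 0 < radial Q x) &
      {within [set x | x != 0], continuous (radial Q)}].

Definition setcoord (n : nat) (x : 'rV[R]_n) (k : nat) (t : R) : 'rV[R]_n :=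
  \row_(i < n) (if (i : nat) == k then t else x 0 i).

(* iterated Lebesgue integral over the first k coordinates;
   iint n f 0 is the Lebesgue integral of f over R^n *)
Fixpoint iint (n : nat) (k : nat) (f : 'rV[R]_n -> \bar R) (x : 'rV[R]_n)
  : \bar R :=
  match k with
  | 0%N => f x
  | k'.+1 => (\int[lebesgue_measure]_(t in [set: R]) iint k' f (setcoord x k' t))%E
  end.

(* integral over S^{n-1} w.r.t. spherical Lebesgue measure, defined via the
   cone measure:  int_{S^{n-1}} g du = n * int_{B^n} g(x/|x|) dx *)
Definition sphere_integral (n : nat) (g : 'rV[R]_n -> \bar R) : \bar R :=
  ((n%:R)%:E * iint n
     (fun x => if ((0 < enorm x) && (enorm x <= 1))%R
               then g ((enorm x)^-1 *: x)%R else 0%E) 0)%E.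

End Defs.

(* Main.v *)
Require Import Defs.
From HB Require Import structures.
From mathcomp Require Import all_boot all_order all_algebra.
From mathcomp Require Import all_classical all_reals all_analysis.
Import Order.TTheory GRing.Theory Num.Theory.
Import numFieldNormedType.Exports.
Local Open Scope classical_set_scope.
Local Open Scope ring_scope.
From mathcomp Require Import ring lra measurable_realfun.


Section H.
Set Implicit Arguments. Unset Strict Implicit. Unset Printing Implicit Defensive.
Variable R : realType.
Local Notation leb := (@lebesgue_measure R).

Lemma int_mono (f g : R -> \bar R) : (forall t, (0 <= f t)%E) ->
  (forall t, (f t <= g t)%E) ->
  (\int[leb]_(t in [set: R]) f t <= \int[leb]_(t in [set: R]) g t)%E.
Proof.
move=> f0 fg.
have g0 : forall t, (0 <= g t)%E by move=> t; exact: le_trans (f0 t) (fg t).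
rewrite !ge0_integralTE//.
apply: ereal_sup_le => _ [h hf <-]; exists h => //= x.
exact: le_trans (hf x) (fg x).
Qed.

Lemma iint_ge0 n (f : 'rV[R]_n -> \bar R) : (forall y, (0 <= f y)%E) ->
  forall k x, (0 <= iint k f x)%E.
Proof.
move=> f0; elim=> [|k IH] x /=; first exact: f0.
by apply: integral_ge0 => t _; exact: IH.
Qed.

Lemma int_cst_indic (A : set R) (c : R) : measurable A -> 0 <= c ->
  (\int[leb]_(t in [set: R]) (c * \1_A t)%:E = c%:E * leb A)%E.
Proof.
move=> mA c0.
have := @integralZl_indic _ _ _ leb _ measurableT (fun=> A) c.
rewrite /= => ->//.
  by rewrite integral_indic// setIT.
by move=> /(le_lt_trans c0); rewrite ltxx.
Qed.

Lemma radial_le n (S : set 'rV[R]_n) u b : 0 <= b ->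
  (forall l, 0 <= l -> S (l *: u) -> l <= b) -> radial S u <= b.
Proof.
move=> b0 H; rewrite /radial.
have [->|ne] := eqVneq [set l : R | 0 <= l /\ S (l *: u)] set0.
  by rewrite sup0.
apply: ge_sup; first exact/set0P.
by move=> l [l0 Sl]; exact: H.
Qed.

Lemma radial_ge0 n (S : set 'rV[R]_n) u b : S 0 ->
  (forall l, 0 <= l -> S (l *: u) -> l <= b) -> 0 <= radial S u.
Proof.
move=> S0 H; rewrite /radial.
have hub : has_ubound [set l : R | 0 <= l /\ S (l *: u)].
  by exists b => l [l0 Sl]; exact: H.
apply: (ub_le_sup hub); split => //; by rewrite scale0r.
Qed.

Lemma dotpE n (x y : 'rV[R]_n) : dotp x y = (x *m y^T) 0 0.
Proof. by rewrite /dotp !mxE; apply: eq_bigr => i _; rewrite !mxE. Qed.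

End H.


Section H2.
Set Implicit Arguments. Unset Strict Implicit. Unset Printing Implicit Defensive.
Variable R : realType.
Variable n : nat.
Local Notation leb := (@lebesgue_measure R).

Definition box (k : nat) (y : 'rV[R]_n) : bool :=
  [forall i : 'I_n, (k <= i)%N ==> (`|y 0 i| <= 1)].

Lemma box_setcoord k x t : (k < n)%N -> box k (setcoord x k t) ->
  (`|t| <= 1) && box k.+1 x.
Proof.
move=> kn /forallP H; apply/andP; split.
  by have := H (Ordinal kn); rewrite leqnn /= mxE eqxx.
apply/forallP => i; apply/implyP => ki.
have := H i; rewrite (ltnW ki) /= mxE.
by rewrite (gtn_eqF ki).
Qed.

Lemma itv_m11 : [set` `[(-1 : R), 1]] = [set t : R | `|t| <= 1].
Proof.
by apply/seteqP; split => t /=; rewrite in_itv /= ler_norml.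
Qed.

Lemma step k (f : 'rV[R]_n -> \bar R) (G : 'rV[R]_n -> R) : (k < n)%N ->
  (forall y, (0 <= f y)%E) -> (forall y, 0 <= G y) ->
  (forall x t, G (setcoord x k t) = G x) ->
  (forall y, (iint k f y <= ((box k y)%:R * G y)%:E)%E) ->
  forall x, (iint k.+1 f x <= ((box k.+1 x)%:R * (2 * G x))%:E)%E.
Proof.
move=> kn f0 G0 Ginv H x /=.
apply: le_trans (int_mono (g := fun t => (((box k.+1 x)%:R * G x) * \1_[set` `[(-1 : R), 1]] t)%:E) _ _) _.
- by move=> t; exact: iint_ge0.
- move=> t; apply: le_trans (H _) _; rewrite Ginv lee_fin.
  case B: (box k (setcoord x k t)); last first.
    by rewrite mul0r mulr_ge0 ?mulr_ge0// ?indic_ge0//.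
  have /andP[t1 bx] := box_setcoord kn B.
  by rewrite bx indicE itv_m11 mem_set// mul1r !mulr1.
- rewrite int_cst_indic//; last by rewrite mulr_ge0.
  rewrite lebesgue_measure_itv /= lte_fin gtrN// -EFinD -EFinM lee_fin.
  idtac.
  by rewrite opprK (_ : _ * (1+1) = (box k.+1 x)%:R * (2 * G x)) //; ring.
Qed.

End H2.


Section H3.
Set Implicit Arguments. Unset Strict Implicit. Unset Printing Implicit Defensive.
Variable R : realType.
Variable n : nat.
Local Notation leb := (@lebesgue_measure R).

Lemma dotp_setcoord (i0 : 'I_n) (x a : 'rV[R]_n) t :
  dotp (setcoord x i0 t) a = dotp (setcoord x i0 0) a + t * a 0 i0.
Proof.
rewrite /dotp (bigD1 i0)//= [in RHS](bigD1 i0)//= !mxE eqxx mul0r add0r addrC.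
congr (_ + _); apply: eq_bigr => i /negbTE ni; rewrite !mxE.
by rewrite (_ : (i == i0 :> nat) = false).
Qed.

Lemma int_two (c1 c2 : R) (A B : set R) : measurable A -> measurable B ->
  0 <= c1 -> 0 <= c2 ->
  (\int[leb]_(t in [set: R]) (c1 * \1_A t + c2 * \1_B t)%:E
   = c1%:E * leb A + c2%:E * leb B)%E.
Proof.
move=> mA mB c10 c20.
under eq_integral do rewrite EFinD.
rewrite ge0_integralD//.
- by rewrite !int_cst_indic.
- by move=> t _; rewrite lee_fin mulr_ge0.
- by apply/measurable_EFinP; apply: measurable_funM => //; exact: measurable_indic.
- by move=> t _; rewrite lee_fin mulr_ge0.
- by apply/measurable_EFinP; apply: measurable_funM => //; exact: measurable_indic.
Qed.

Lemma step_slab (i0 : 'I_n) (f : 'rV[R]_n -> \bar R) (A B eta : R) (a : 'rV[R]_n) :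
  (forall y, (0 <= f y)%E) -> 0 <= A -> 0 <= B -> 0 < eta -> a 0 i0 != 0 ->
  (forall y, (iint i0 f y <= ((box i0 y)%:R * (A + B * (`|dotp y a| < eta)%R%:R))%:E)%E) ->
  forall x, (iint i0.+1 f x <= ((box i0.+1 x)%:R * (2 * A + B * (2 * (eta / `|a 0 i0|))))%:E)%E.
Proof.
move=> f0 A0 B0 eta0 a0 H x /=.
set b := dotp (setcoord x i0 0) a.
set r := eta / `|a 0 i0|.
set c := - b / a 0 i0.
have r0 : 0 <= r by rewrite /r divr_ge0 ?normr_ge0 ?ltW.
apply: le_trans (int_mono (g := fun t =>
   (((box i0.+1 x)%:R * A) * \1_[set` `[(-1 : R), 1]] t +
    ((box i0.+1 x)%:R * B) * \1_(ball c r) t)%:E) _ _) _.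
- by move=> t; exact: iint_ge0.
- move=> t; apply: le_trans (H _) _; rewrite lee_fin.
  case Bx: (box i0 (setcoord x i0 t)); last first.
    by rewrite mul0r addr_ge0// mulr_ge0 ?mulr_ge0// ?indic_ge0//.
  have /andP[t1 bx] := box_setcoord (ltn_ord i0) Bx.
  rewrite bx mul1r !indicE itv_m11 mem_set// !mul1r mulr1 lerD2l.
  case S: (`|dotp (setcoord x i0 t) a| < eta); last by rewrite mulr0 mulr_ge0 ?indic_ge0//.
  rewrite mem_set ?mulr1//.
  move: S; rewrite dotp_setcoord -/b /ball /= => S.
  have an : 0 < `|a 0 i0| by rewrite normr_gt0.
  rewrite /c /r ltr_pdivlMr// -normrM mulrBl !mulNr divfK// -opprD normrN.
  exact: S.
- rewrite int_two//; last 3 first.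
  + exact: measurable_ball.
  + by rewrite mulr_ge0.
  + by rewrite mulr_ge0.
  rewrite lebesgue_measure_itv /= lte_fin gtrN// lebesgue_measure_ball//.
  rewrite opprK (_ : (1 + 1%:E)%E = (2:R)%:E) // -!EFinM -EFinD lee_fin -[r *+ 2]mulr_natl.
  have -> : forall z : R, z * A * 2 + z * B * (2 * r) = z * (2 * A + B * (2 * r)).
    by move=> z; ring.
  by [].
Qed.

End H3.


Section H4.
Set Implicit Arguments. Unset Strict Implicit. Unset Printing Implicit Defensive.
Variable R : realType.
Variable n : nat.

Lemma dotp_setcoord0 (k : nat) (x a : 'rV[R]_n) t :
  (forall i : 'I_n, i = k :> nat -> a 0 i = 0) ->
  dotp (setcoord x k t) a = dotp x a.
Proof.
move=> ak; rewrite /dotp; apply: eq_bigr => i _; rewrite mxE.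
case: eqP => [/ak ->|//]; by rewrite !mulr0.
Qed.

Lemma iint_bound (f : 'rV[R]_n -> \bar R) (a : 'rV[R]_n) (i0 : 'I_n) (A B eta : R) :
  (forall y, (0 <= f y)%E) -> 0 <= A -> 0 <= B -> 0 < eta -> a 0 i0 != 0 ->
  (forall i : 'I_n, (i < i0)%N -> a 0 i = 0) ->
  (forall y, (f y <= ((box 0 y)%:R * (A + B * (`|dotp y a| < eta)%R%:R))%:E)%E) ->
  (iint n f 0 <= (2 ^+ n * (A + B * (eta / `|a 0 i0|)))%:E)%E.
Proof.
move=> f0 A0 B0 eta0 ai0 az fb.
set S := fun y : 'rV[R]_n => (`|dotp y a| < eta)%R%:R : R.
have S0 y : 0 <= S y by rewrite /S ler0n.
have ph1 : forall k, (k <= i0)%N -> forall y,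
    (iint k f y <= ((box k y)%:R * (2 ^+ k * A + 2 ^+ k * B * S y))%:E)%E.
  elim=> [_ y|k IH ki y] /=; first by rewrite !mul1r; exact: fb.
  have kn : (k < n)%N by apply: leq_trans ki (ltnW (ltn_ord i0)).
  have := @step R n k f (fun y => 2 ^+ k * A + 2 ^+ k * B * S y) kn f0.
  move=> /(_ _ _ (IH (ltnW ki))) H.
  have -> : 2 ^+ k.+1 * A + 2 ^+ k.+1 * B * S y = 2 * (2 ^+ k * A + 2 ^+ k * B * S y).
    by rewrite !exprS; ring.
  apply: H.
  - by move=> z; rewrite addr_ge0 ?mulr_ge0 ?exprn_ge0.
  - move=> x t; rewrite /S dotp_setcoord0// => i ik.
    by apply: az; rewrite ik.
have H1 := @step_slab R n i0 f (2 ^+ i0 * A) (2 ^+ i0 * B) eta a f0.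
have {H1} H1 : forall x, (iint i0.+1 f x <= ((box i0.+1 x)%:R *
     (2 ^+ i0.+1 * (A + B * (eta / `|a 0 i0|))))%:E)%E.
  move=> x.
  have := H1 (mulr_ge0 (exprn_ge0 _ (ler0n _ 2)) A0)
    (mulr_ge0 (exprn_ge0 _ (ler0n _ 2)) B0) eta0 ai0 (ph1 _ (leqnn _)) x.
  move/le_trans; apply; rewrite lee_fin ler_wpM2l ?ler0n//.
  by rewrite le_eqVlt; apply/orP; left; apply/eqP; rewrite exprS; ring.
have ph2 : forall m, (i0.+1 + m <= n)%N -> forall y,
    (iint (i0.+1 + m) f y <= ((box (i0.+1 + m) y)%:R *
       (2 ^+ (i0.+1 + m) * (A + B * (eta / `|a 0 i0|))))%:E)%E.
  elim=> [_ y|m IH mn y]; first by rewrite addn0; exact: H1.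
  have kn : (i0.+1 + m < n)%N by rewrite -addnS.
  rewrite addnS.
  have := @step R n (i0.+1 + m) f (fun=> 2 ^+ (i0.+1 + m) * (A + B * (eta / `|a 0 i0|))) kn f0.
  move=> /(_ _ _ (IH (ltnW kn))) H.
  rewrite exprS -mulrA; apply: H => //.
  by rewrite mulr_ge0 ?exprn_ge0// addr_ge0// mulr_ge0// divr_ge0// ltW.
have := ph2 (n - i0.+1)%N; rewrite subnKC//.
move=> /(_ (leqnn _) 0) /le_trans; apply.
rewrite lee_fin (_ : box n 0 = true) ?mul1r//.
by apply/forallP => i; apply/implyP; rewrite leqNgt ltn_ord.
Qed.

End H4.


Section H5.
Set Implicit Arguments. Unset Strict Implicit. Unset Printing Implicit Defensive.
Variable R : realType.
Variable n : nat.

Lemma entry_le (y : 'rV[R]_n) i : `|y 0 i| <= `|y|.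
Proof.
have /mapP[j Hj ->] : `|y 0 i| \in [seq `|y x.1 x.2| | x : 'I_1 * 'I_n].
  by apply/mapP; exists (ord0, i) => //=; rewrite mem_enum.
by rewrite [leRHS]/Num.norm /= mx_normrE; apply/bigmax_geP; right => /=; exists j.
Qed.

Lemma dotpZ l (u v : 'rV[R]_n) : dotp (l *: u) v = l * dotp u v.
Proof.
rewrite /dotp mulr_sumr; apply: eq_bigr => i _; rewrite mxE; ring.
Qed.

Lemma dotpC (u v : 'rV[R]_n) : dotp u v = dotp v u.
Proof. by rewrite /dotp; apply: eq_bigr => i _; rewrite mulrC. Qed.

Lemma parseval (e : nat -> 'rV[R]_n) : orthonormal_basis e -> forall u,
  \sum_(i < n) (dotp u (e i)) ^+ 2 = dotp u u.
Proof.
move=> oe u.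
pose E : 'M[R]_n := \matrix_(i, k) e i 0 k.
have EE : E *m E^T = 1%:M.
  apply/matrixP => i k; rewrite !mxE.
  rewrite (_ : \sum_j _ = dotp (e i) (e k)); last first.
    by apply: eq_bigr => l _; rewrite !mxE.
  by rewrite oe// (inj_eq val_inj).
have EtE : E^T *m E = 1%:M by apply: mulmx1C.
pose v := u *m E^T.
have vE i : v 0 i = dotp u (e i).
  by rewrite /v !mxE /dotp; apply: eq_bigr => l _; rewrite !mxE.
rewrite (eq_bigr (fun i => v 0 i * v 0 i)); last by move=> i _; rewrite vE expr2.
rewrite (_ : \sum_(i < n) v 0 i * v 0 i = dotp v v) // !dotpE.
by rewrite /v trmx_mul trmxK !mulmxA -(mulmxA u) EtE mulmx1.
Qed.

End H5.


Section H6.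
Set Implicit Arguments. Unset Strict Implicit. Unset Printing Implicit Defensive.
Variable R : realType.
Variable n : nat.

Lemma Tbound (e : nat -> 'rV[R]_n) (alpha l : R) u : (0 < n)%N ->
  orthonormal_basis e -> dotp u u = 1 -> 0 <= l ->
  Talpha e alpha (l *: u) -> l ^+ 2 <= alpha ^+ 2 + 1 /\ l * `|dotp u (e 0%N)| <= alpha.
Proof.
move=> n0 oe uu l0 [h1 h2].
rewrite dotpZ normrM ger0_norm // in h1; split => //.
have := parseval oe u; rewrite uu -(big_mkord xpredT (fun i => (dotp u (e i)) ^+ 2)).
rewrite big_ltn// => P.
have -> : l ^+ 2 = (l * dotp u (e 0%N)) ^+ 2 + \sum_(1 <= i < n) (dotp (l *: u) (e i)) ^+ 2.
  rewrite -[l ^+ 2]mulr1 -P mulrDr exprMn; congr (_ + _).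
  by rewrite mulr_sumr; apply: eq_bigr => i _; rewrite dotpZ exprMn.
apply: lerD => //.
rewrite -real_normK ?num_real// normrM (ger0_norm l0).
have z0 : 0 <= l * `|dotp u (e 0%N)| by rewrite mulr_ge0.
move: h1 z0; set z := l * _ => h1 z0; rewrite !expr2; nra.
Qed.

Lemma radT_bounds (e : nat -> 'rV[R]_n) (alpha eta : R) u : (0 < n)%N ->
  orthonormal_basis e -> dotp u u = 1 -> 0 < alpha <= 1 ->
  [/\ 0 <= radial (Talpha e alpha) u, radial (Talpha e alpha) u <= 3 &
      (0 < eta -> eta <= `|dotp u (e 0%N)| -> radial (Talpha e alpha) u <= alpha / eta)].
Proof.
move=> n0 oe uu /andP[a0 a1].
have l3 : forall l, 0 <= l -> Talpha e alpha (l *: u) -> l <= 3.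
  move=> l l0 /(Tbound n0 oe uu l0) [h _].
  have : alpha ^+ 2 <= 1 by rewrite expr2; nra.
  move: h; rewrite !expr2 => h1 h2; nra.
have T0 : Talpha e alpha 0.
  split; first by rewrite /dotp big1 ?normr0 ?ltW// => i _; rewrite mxE mul0r.
  rewrite big1_seq// => i _; rewrite /dotp big1 ?expr0n// => k _.
  by rewrite mxE mul0r.
split.
- exact: radial_ge0 T0 l3.
- by apply: radial_le.
- move=> eta0 etau; apply: radial_le; first by rewrite divr_ge0 ?ltW.
  move=> l l0 /(Tbound n0 oe uu l0) [_ h].
  rewrite ler_pdivlMr//; apply: le_trans h.
  by rewrite ler_wpM2l.
Qed.

End H6.


Section H7.
Set Implicit Arguments. Unset Strict Implicit. Unset Printing Implicit Defensive.
Variable R : realType.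
Variable n : nat.

Lemma dotp_ge0 (x : 'rV[R]_n) : 0 <= dotp x x.
Proof. by rewrite /dotp sumr_ge0// => i _; rewrite -expr2 sqr_ge0. Qed.

Lemma entry_sq_le (x : 'rV[R]_n) i : x 0 i ^+ 2 <= dotp x x.
Proof.
rewrite /dotp (bigD1 i)//= -expr2 lerDl sumr_ge0// => k _.
by rewrite -expr2 sqr_ge0.
Qed.

Lemma powR_mono (r a b : R) : 0 <= r -> 0 <= a -> a <= b -> a `^ r <= b `^ r.
Proof.
move=> r0 a0 ab; apply: (ge0_ler_powR r0) => //; rewrite nnegrE//.
exact: le_trans ab.
Qed.

Lemma pw_bound (e : nat -> 'rV[R]_n) (Q : set 'rV[R]_n) (RQ p q alpha eta : R)
  (x : 'rV[R]_n) : (0 < n)%N -> orthonormal_basis e -> 0 < q -> 0 <= p ->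
  0 < alpha <= 1 -> 0 < eta -> 0 <= RQ ->
  (forall u, dotp u u = 1 -> 0 <= radial Q u <= RQ) ->
  ((if ((0 < enorm x) && (enorm x <= 1))%R
   then ((radial (Talpha e alpha) ((enorm x)^-1 *: x)) `^ q *
         (radial Q ((enorm x)^-1 *: x)) `^ p)%:E else 0%E)
  <= ((box 0 x)%:R * (RQ `^ p * (alpha / eta) `^ q +
        RQ `^ p * 3 `^ q * (`|dotp x (e 0%N)| < eta)%R%:R))%:E)%E.
Proof.
move=> n0 oe q0 p0 al eta0 RQ0 hQ.
have rhs0 : 0 <= (box 0 x)%:R * (RQ `^ p * (alpha / eta) `^ q +
        RQ `^ p * 3 `^ q * (`|dotp x (e 0%N)| < eta)%R%:R).
  by rewrite mulr_ge0// addr_ge0// !mulr_ge0 ?powR_ge0.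
case: ifP => [/andP[r0 r1]|_]; last by rewrite lee_fin.
rewrite lee_fin.
set r := enorm x; set u := r^-1 *: x.
have xx : dotp x x = r ^+ 2 by rewrite /r /enorm sqr_sqrtr// dotp_ge0.
have uu : dotp u u = 1.
  rewrite /u dotpZ dotpC dotpZ xx; field; exact: lt0r_neq0.
have bx : box 0 x.
  apply/forallP => i; apply/implyP => _.
  have := entry_sq_le x i; rewrite xx => h.
  have : r ^+ 2 <= 1 by rewrite expr2 mulr_ile1 // ltW.
  move=> h2; have := le_trans h h2; rewrite -real_normK ?num_real// => h3.
  have := normr_ge0 (x 0 i); move: h3; set z := `|x 0 i|; rewrite expr2 => *; nra.
rewrite bx mul1r.
have [RT0 RT3 RTa] := @radT_bounds R n e alpha eta u n0 oe uu al.
have /andP[Q0 QR] := hQ _ uu.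
have QRp : (radial Q u) `^ p <= RQ `^ p by exact: powR_mono.
case: ltP => S.
- rewrite mulr1 -[_ * _]add0r lerD ?mulr_ge0 ?powR_ge0// mulrC.
  by rewrite ler_pM ?powR_ge0// powR_mono// ltW.
- rewrite mulr0 addr0 mulrC ler_pM ?powR_ge0// powR_mono ?(ltW q0)// RTa//.
  have ri : 0 <= r^-1 by rewrite invr_ge0 ltW.
  rewrite /u dotpZ normrM (ger0_norm ri).
  apply: le_trans S _; rewrite ler_peMl ?normr_ge0// invr_ge1// ?unitfE ?lt0r_neq0//.
Qed.

End H7.


Lemma half_bound (R : realType) (K X e : R) : 0 <= K -> 0 <= X -> 0 < e ->
  X <= e / (2 * (K + 1)) -> K * X <= e / 2.
Proof.
move=> K0 X0 e0; rewrite ler_pdivlMr; last by lra.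
rewrite ler_pdivlMr; last by lra.
move=> h; nra.
Qed.

Lemma Qbound (R : realType) (n : nat) (Q : set 'rV[R]_n) : in_Son Q ->
  exists RQ : R, 0 <= RQ /\ forall u, dotp u u = 1 -> 0 <= radial Q u <= RQ.
Proof.
case=> cQ _ pos _.
have [M [Mreal HM]] := compact_bounded cQ.
set M1 := `|M| + 1.
have M1M : M < M1 by rewrite /M1 (le_lt_trans (ler_norm M))// ltrDl.
have hb : forall y, Q y -> forall i, `|y 0 i| <= M1.
  by move=> y Qy i; apply: le_trans (entry_le y i) _; exact: (HM _ M1M y Qy).
exists (1 + n%:R * M1 ^+ 2); split.
  by rewrite addr_ge0// mulr_ge0// sqr_ge0.
move=> u uu; apply/andP; split.
  apply/ltW/pos; apply/eqP => u0; move: uu; rewrite u0 /dotp big1 => [/eqP|i _].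
    by rewrite eq_sym oner_eq0.
  by rewrite mxE mul0r.
apply: radial_le; first by rewrite addr_ge0// mulr_ge0// sqr_ge0.
move=> l l0 Ql.
have : dotp (l *: u) (l *: u) <= n%:R * M1 ^+ 2.
  rewrite /dotp; apply: (@le_trans _ _ (\sum_(i < n) M1 ^+ 2)).
    apply: ler_sum => i _.
    have h1 := hb _ Ql i; have h0 := normr_ge0 ((l *: u) 0 i).
    rewrite -expr2 -real_normK ?num_real//; move: h1 h0.
    set z := `|_|; rewrite !expr2 => *; nra.
  by rewrite sumr_const card_ord mulr_natl.
rewrite dotpZ dotpC dotpZ uu mulr1 => h; nra.
Qed.

Lemma first_nz (R : realType) (n : nat) (a : 'rV[R]_n) : dotp a a = 1 ->
  exists i0 : 'I_n, a 0 i0 != 0 /\ forall i : 'I_n, (i < i0)%N -> a 0 i = 0.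
Proof.
move=> aa.
have ex : exists k, [exists i : 'I_n, (val i == k) && (a 0 i != 0)].
  case: (pselect (exists i : 'I_n, a 0 i != 0)) => [[i ai]|Hn].
    by exists (val i); apply/existsP; exists i; rewrite eqxx ai.
  move: aa; rewrite /dotp big1 => [/eqP|i _].
    by rewrite eq_sym oner_eq0.
  case: (eqVneq (a 0 i) 0) => [->|ai]; first by rewrite mul0r.
  by exfalso; apply: Hn; exists i.
case: (ex_minnP ex) => m /existsP[i0 /andP[/eqP i0m ai0]] mmin.
exists i0; split => // i ii0; apply/eqP/negP => /negP ai.
have := mmin (val i); rewrite -i0m.
have -> : [exists i1 : 'I_n, (val i1 == val i) && (a 0 i1 != 0)].
  by apply/existsP; exists i; rewrite eqxx ai.
by move=> /(_ isT); rewrite leqNgt ii0.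
Qed.


Theorem lemma6p3 (R : realType) (n j : nat) (q : R) (e : nat -> 'rV[R]_n)
  (Q : set 'rV[R]_n) :
  (2 <= n)%N -> orthonormal_basis e -> j <> n ->
  0 < q -> q < n%:R - j%:R -> in_Son Q ->
  sphere_integral (fun u => ((radial (Talpha e alpha) u) `^ q *
                             (radial Q u) `^ (n%:R - q - j%:R))%:E)
    @[alpha --> 0^'+] --> 0%E.
Proof.
move=> n2 oe _ q0 qnj QS.
have n0 : (0 < n)%N by apply: leq_trans n2.
set p := n%:R - q - j%:R.
have p0 : 0 <= p by rewrite /p; lra.
have [RQ [RQ0 hQ]] := @Qbound R n Q QS.
have [i0 [ai0 az]] := @first_nz R n (e 0%N) (oe 0%N 0%N n0 n0).
set a := e 0%N.
set K := n%:R * 2 ^+ n * RQ `^ p.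
set L := K * 3 `^ q / `|a 0 i0|.
have K0 : 0 <= K by rewrite /K !mulr_ge0 ?powR_ge0 ?exprn_ge0.
have L0 : 0 <= L by rewrite /L !mulr_ge0 ?powR_ge0 ?invr_ge0.
set F := fun alpha => sphere_integral _.
have Fb : forall alpha eta, 0 < alpha <= 1 -> 0 < eta ->
    (0 <= F alpha /\ F alpha <= (K * (alpha / eta) `^ q + L * eta)%:E)%E.
  move=> alpha eta al eta0.
  set h := fun x : 'rV[R]_n => if ((0 < enorm x) && (enorm x <= 1))%R
               then ((radial (Talpha e alpha) ((enorm x)^-1 *: x)) `^ q *
                     (radial Q ((enorm x)^-1 *: x)) `^ p)%:E else 0%E.
  have h0 : forall y, (0 <= h y)%E.
    by move=> y; rewrite /h; case: ifP => // _; rewrite lee_fin mulr_ge0 ?powR_ge0.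
  have hb := @iint_bound R n h a i0 (RQ `^ p * (alpha / eta) `^ q) (RQ `^ p * 3 `^ q) eta h0
    (mulr_ge0 (powR_ge0 _ _) (powR_ge0 _ _)) (mulr_ge0 (powR_ge0 _ _) (powR_ge0 _ _)) eta0 ai0 az
    (fun y => pw_bound (alpha:=alpha) (eta:=eta) y n0 oe q0 p0 al eta0 RQ0 hQ).
  rewrite /F /sphere_integral -/h; split.
    by rewrite mule_ge0// ?lee_fin// iint_ge0.
  apply: le_trans (lee_wpmul2l _ hb) _; first by rewrite lee_fin ler0n.
  rewrite -EFinM lee_fin le_eqVlt; apply/orP; left; apply/eqP.
  by rewrite /L /K -/a; ring.
apply/fine_cvgP; split.
  near=> alpha.
  have a0 : 0 < alpha by near: alpha; exact: nbhs_right_gt.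
  have a1 : alpha <= 1 by near: alpha; exact: nbhs_right_ltW.
  have [F0 Fle] := Fb alpha 1 (introT andP (conj a0 a1)) ltr01.
  by rewrite ge0_fin_numE// (le_lt_trans Fle)// ltry.
apply/cvgrPdist_le => eps eps0.
set eta := eps / (2 * (L + 1)).
set E := eps / (2 * (K + 1)).
set del := E `^ q^-1.
have eta0 : 0 < eta by rewrite /eta divr_gt0//; lra.
have E0 : 0 < E by rewrite /E divr_gt0//; lra.
have del0 : 0 < del by rewrite /del powR_gt0.
near=> alpha.
have a0 : 0 < alpha by near: alpha; exact: nbhs_right_gt.
have a1 : alpha <= 1 by near: alpha; exact: nbhs_right_ltW.
have aed : alpha < eta * del by near: alpha; apply: nbhs_right_lt; rewrite mulr_gt0.
have [F0 Fle] := Fb alpha eta (introT andP (conj a0 a1)) eta0.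
have Ffin : F alpha \is a fin_num by rewrite ge0_fin_numE// (le_lt_trans Fle)// ltry.
rewrite /= sub0r normrN ger0_norm ?fine_ge0//.
rewrite -lee_fin fineK//; apply: le_trans Fle _; rewrite lee_fin.
have t0 : 0 <= alpha / eta by rewrite divr_ge0 ?ltW.
have tq : (alpha / eta) `^ q <= E.
  have -> : E = del `^ q by rewrite /del -powRrM mulVf ?gt_eqF// powRr1 ?ltW.
  apply: powR_mono => //; first exact: ltW.
  by rewrite ler_pdivrMr// mulrC ltW.
have h1 := @half_bound R _ _ _ K0 (powR_ge0 _ _) eps0 tq.
have h2 := @half_bound R L eta eps L0 (ltW eta0) eps0 (le_refl _).
lra.
Unshelve. all: by end_near.
Qed.
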